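(* Let $\lambda$ be a partition of length $<n$ whose diagram consists of $d_i$ columns of length $n_i$ ($i=1,\dots,s$, $n_1<\dots<n_s$, $d_i\ge1$), and let $t\in\mathbb{S}_\lambda V$ be nonzero. If the Catalecticant Procedure applied to $(\lambda,t)$ outputs $r$, then $t$ has $\lambda$-rank at least $r$.
   Context: $V$ is an $n$-dimensional vector space over an algebraically closed field of characteristic $0$. $\mathbb{S}_\lambda V\subset\bigotimes_j\bigwedge^{\lambda'_j}V$ is the image of the Young symmetrizer (row symmetrization then column antisymmetrization, tableau filled column by column). Schur apolarity $\varphi:\mathbb{S}_\lambda V\otimes\mathbb{S}_\mu V^*\to\mathbb{S}_{\lambda/\mu}V$ is the restriction of the tensor product over columns of the contractions $(v_1\wedge\dots\wedge v_k)\otimes(\alpha_1\wedge\dots\wedge\alpha_h)\mapsto\sum_{|R|=h}\operatorname{sign}(R)\det(\alpha_i(v_j))_{j\in R}v_{\overline R}$; catalecticant $\mathcal{C}^{\lambda,\mu}_t(g)=\varphi(t\otimes g)$. $(e^m)$ is the rectangular partition with $m$ parts equal to $e$. An element of $\mathbb{S}_\lambda V$ has $\lambda$-rank $1$ if it equals $(v_1\wedge\dots\wedge v_{n_s})^{\otimes d_s}\otimes\dots\otimes(v_1\wedge\dots\wedge v_{n_1})^{\otimes d_1}$ for linearly independent $v_1,\dots,v_{n_s}$; the $\lambda$-rank of $t$ is the least $r$ with $t$ a sum of $r$ such elements. Catalecticant Procedure: set $i=s$, $\lambda^{(s)}=\lambda$, $t^{(s)}=t$. While $i\ge1$: $\lambda^{(i)}$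 has $d_j$ columns of length $n_j$ for $j\le i$; compute $r=\operatorname{rk}\mathcal{C}^{\lambda^{(i)},(\lceil d_i/2\rceil^{n_i})}_{t^{(i)}}$; if $r>1$, output $r$ and stop; otherwise the image of $\mathcal{C}^{\lambda^{(i)},(d_i^{n_i})}_{t^{(i)}}$, in $\mathbb{S}_{\lambda^{(i)}/(d_i^{n_i})}V\cong\mathbb{S}_{\lambda^{(i-1)}}V$ ($\lambda^{(i-1)}$ = $\lambda^{(i)}$ without its first $d_i$ columns), is one-dimensional; let $t^{(i-1)}$ generate it, $i\leftarrow i-1$. If $i$ reaches $0$, output $1$. *)

(* Defs.v *)
From HB Require Import structures.
From mathcomp Require Import all_boot all_order all_fingroup all_algebra.
Set Implicit Arguments. Unset Strict Implicit. Unset Printing Implicit Defensive.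
Import GRing.Theory.
Local Open Scope ring_scope.

(* V = F^n with standard basis e_0..e_(n-1); V^* with the dual basis.         *)
(* A (skew) Young diagram is handled through its boxes (j, r) : nat * nat,    *)
(* j = column index, r = position (row) inside column j.  A partition is given *)
(* by the sequence of its column lengths (= conjugate partition lambda').     *)
(* Tensors on a set of boxes B (one tensor factor V per box) are represented  *)
(* by their coordinates: functions {ffun B -> 'I_n} -> F.  The space          *)
(* (x)_j /\^{lambda'_j} V is identified with the column-antisymmetric tensors *)
(* via v_1/\../\v_k |-> sum_s sgn(s) v_s(1) (x) .. (x) v_s(k).                *)

Definition shape_boxes (cols : seq nat) : seq (nat * nat) :=
  [seq (j, r) | j <- iota 0 (size cols), r <- iota 0 (nth 0%N cols j)].

Definition box (cols : seq nat) := seq_sub (shape_boxes cols).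

Definition skewbox (lam mu : seq nat) :=
  seq_sub [seq p <- shape_boxes lam | p \notin shape_boxes mu].

Section Tensors.
Variables (F : fieldType) (n : nat).

Local Notation tensor B := {ffun {ffun B -> 'I_n} -> F^o}.

(* basis tensor e_f = (x)_b e_(f b) (or its dual) *)
Definition delta (B : finType) (f : {ffun B -> 'I_n}) : tensor B :=
  [ffun f' => (f' == f)%:R].

Definition pact (B : finType) (s : {perm B}) (T : tensor B) : tensor B :=
  [ffun f : {ffun B -> 'I_n} => T [ffun b => f (s b)]].

Definition row_pres (cols : seq nat) (s : {perm box cols}) : bool :=
  [forall b, (ssval (s b)).2 == (ssval b).2].
Definition col_pres (cols : seq nat) (s : {perm box cols}) : bool :=
  [forall b, (ssval (s b)).1 == (ssval b).1].

Definition row_sym (cols : seq nat) (T : tensor (box cols)) : tensor (box cols) :=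
  \sum_(p : {perm box cols} | row_pres p) pact p T.
Definition col_antisym (cols : seq nat) (T : tensor (box cols)) : tensor (box cols) :=
  \sum_(q : {perm box cols} | col_pres q) (-1) ^+ odd_perm q *: pact q T.
Definition young (cols : seq nat) (T : tensor (box cols)) : tensor (box cols) :=
  col_antisym (row_sym T).

Definition inSchur (cols : seq nat) (t : tensor (box cols)) : Prop :=
  exists T, t = young T.

(* the lambda-rank-one element (v_1/\../\v_{n_s})^{(x)d_s} (x) .. (x)
   (v_1/\../\v_{n_1})^{(x)d_1}; the vector v_(r+1) is v r. *)
Definition pure (cols : seq nat) (v : nat -> 'rV[F]_n) : tensor (box cols) :=
  [ffun f : {ffun box cols -> 'I_n} => \prod_(b : box cols) v (ssval b).2 0 (f b)].
Definition rank_one_elt (cols : seq nat) (v : nat -> 'rV[F]_n) : tensor (box cols) :=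
  col_antisym (pure cols v).
(* v_1, .., v_{n_s} linearly independent, n_s = longest column *)
Definition lin_indep_data (cols : seq nat) (v : nat -> 'rV[F]_n) : bool :=
  row_free (\matrix_(a < head 0%N cols) v a).

(* Schur apolarity phi(t (x) g) for mu contained in lam: contraction of the
   slots of the boxes of mu (box (j,r) of mu against box (j,r) of lam). *)
Definition agree (lam mu : seq nat) (Fl : {ffun box lam -> 'I_n})
  (f : {ffun box mu -> 'I_n}) (h : {ffun skewbox lam mu -> 'I_n}) : bool :=
  [forall b : box lam,
     (if (insub (ssval b) : option (box mu)) is Some c then Fl b == f c else true)
  && (if (insub (ssval b) : option (skewbox lam mu)) is Some c then Fl b == h c
      else true)].

Definition apolar (lam mu : seq nat) (t : tensor (box lam)) (g : tensor (box mu)) :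
    tensor (skewbox lam mu) :=
  [ffun h => \sum_(f : {ffun box mu -> 'I_n})
               \sum_(Fl : {ffun box lam -> 'I_n} | agree Fl f h) g f * t Fl].

(* rank of the catalecticant C^{lam,mu}_t : S_mu V^* -> S_{lam/mu} V, i.e. the
   dimension of the span of the images of the spanning family young(e_f^* ). *)
Definition cat_rank (lam mu : seq nat) (t : tensor (box lam)) : nat :=
  \rank (\matrix_(i < #|{ffun box mu -> 'I_n}|, j < #|{ffun skewbox lam mu -> 'I_n}|)
           apolar t (young (delta (enum_val i))) (enum_val j)).

(* the identification S_{lam/mu} V ~ S_{lam'} V when lam/mu is lam' shifted
   by c columns: box (j + c, r) of lam/mu <-> box (j, r) of lam'. *)
Definition reindex (lam mu lam' : seq nat) (c : nat) (s : tensor (skewbox lam mu)) :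
    tensor (box lam') :=
  [ffun f' : {ffun box lam' -> 'I_n} => \sum_(h : {ffun skewbox lam mu -> 'I_n} |
       [forall b : skewbox lam mu, forall b' : box lam',
          (((ssval b).1 == (ssval b').1 + c)%N && ((ssval b).2 == (ssval b').2))
            ==> (h b == f' b')]) s h].

Definition generates_image (lam mu lam' : seq nat) (c : nat) (t : tensor (box lam))
    (t' : tensor (box lam')) : Prop :=
  [/\ t' != 0,
      exists g : tensor (box mu), inSchur g /\ t' = reindex lam' c (apolar t g)
    & forall g : tensor (box mu), inSchur g -> exists a : F, reindex lam' c (apolar t g) = a *: t'].

(* blocks [:: (n_s, d_s); ..; (n_1, d_1)] : d_i columns of length n_i *)
Definition cols_of (bl : seq (nat * nat)) : seq nat :=
  flatten [seq nseq p.2 p.1 | p <- bl].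

Fixpoint CatProc (bl : seq (nat * nat)) : tensor (box (cols_of bl)) -> nat -> Prop :=
  match bl return tensor (box (cols_of bl)) -> nat -> Prop with
  | [::] => fun _ r => r = 1%N
  | p :: rest => fun t r =>
      let r0 := cat_rank (nseq (uphalf p.2) p.1) t in
      (1 < r0 /\ r = r0)%N \/
      ((r0 <= 1)%N /\
       exists t' : tensor (box (cols_of rest)),
         @generates_image (cols_of (p :: rest)) (nseq p.2 p.1) (cols_of rest) p.2 t t' /\ CatProc t' r)
  end.

End Tensors.

Notation tensor F n B := {ffun {ffun B -> 'I_n} -> F^o}.

(* Main.v *)
Require Import Defs.
From HB Require Import structures.
From mathcomp Require Import all_boot all_order all_fingroup all_algebra.
Set Implicit Arguments. Unset Strict Implicit. Unset Printing Implicit Defensive.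
Import GRing.Theory.
Local Open Scope ring_scope.

Section Work.
Variables (F : fieldType) (n : nat) (z0 : 'I_n) (L : seq nat).

Definition GP (P : pred nat) (q : {perm box L}) : bool :=
  col_pres q && [forall b, ~~ P (ssval b).1 ==> (q b == b)].

Definition A (P : pred nat) (v : nat -> 'rV[F]_n) (Fb : {ffun box L -> 'I_n}) : F :=
  \sum_(q : {perm box L} | GP P q) (-1) ^+ odd_perm q *
     \prod_(b : box L | P (ssval b).1) v (ssval b).2 0 (Fb (q b)).

Lemma colP (q : {perm box L}) b : col_pres q -> (ssval (q b)).1 = (ssval b).1.
Proof. by move=> /forallP /(_ b) /eqP. Qed.

Lemma A_dep (P : pred nat) v (F1 F2 : {ffun box L -> 'I_n}) : (forall b : box L, P (ssval b).1 -> F1 b = F2 b) ->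
  A P v F1 = A P v F2.
Proof.
move=> H; apply: eq_bigr => q /andP [cq _]; congr (_ * _).
by apply: eq_bigr => b Pb; rewrite H // colP.
Qed.

Definition rfun (P : pred nat) (q : {perm box L}) : {ffun box L -> box L} :=
  [ffun b => if P (ssval b).1 then q b else b].

Definition rP (P : pred nat) (q : {perm box L}) : {perm box L} :=
  insubd (1%g : {perm box L}) (rfun P q).

Lemma rPE (P : pred nat) q b : col_pres q -> rP P q b = if P (ssval b).1 then q b else b.
Proof.
move=> cq; rewrite /rP.
have inj : injectiveb (rfun P q).
  apply/injectiveP => b1 b2; rewrite !ffunE.
  case: ifP => P1; case: ifP => P2 //.
  - exact: perm_inj.
  - by move=> e; move: P1; rewrite -(colP b1 cq) e P2.
  - by move=> e; move: P2; rewrite -(colP b2 cq) -e P1.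
have := insubdK (1%g : {perm box L}) inj.
move=> e; by rewrite -pvalE e ffunE.
Qed.


Lemma GP_col (P : pred nat) q : GP P q -> col_pres q.
Proof. by case/andP. Qed.

Lemma GP_fix (P : pred nat) q b : GP P q -> ~~ P (ssval b).1 -> q b = b.
Proof. by case/andP => _ /forallP /(_ b) /implyP H /H /eqP. Qed.

Lemma col_presM (p1 p2 : {perm box L}) : col_pres p1 -> col_pres p2 -> col_pres (p1 * p2)%g.
Proof.
move=> c1 c2; apply/forallP => b; by rewrite permM (colP _ c2) (colP _ c1).
Qed.

Lemma GP_rP (P : pred nat) q : col_pres q -> GP P (rP P q).
Proof.
move=> cq; apply/andP; split.
  apply/forallP => b; rewrite rPE //; case: ifP => _ //; by rewrite (colP _ cq).
apply/forallP => b; apply/implyP => nP; by rewrite rPE // (negbTE nP).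
Qed.

Lemma A_split (P Q : pred nat) v Fb : (forall j, P j -> ~~ Q j) ->
  A (predU P Q) v Fb = A P v Fb * A Q v Fb.
Proof.
move=> dPQ; rewrite /A [RHS]mulr_suml.
under [RHS]eq_bigr do rewrite mulr_sumr.
rewrite pair_big_dep /=.
rewrite (reindex_onto (fun p : {perm box L} * {perm box L} => (p.1 * p.2)%g)
           (fun q => (rP P q, rP Q q))) /=; last first.
  move=> q gq; apply/permP => b; have cq := GP_col gq.
  rewrite permM (rPE P) //.
  case: ifP => Pb.
    by rewrite rPE // (colP _ cq) (negbTE (dPQ _ Pb)).
  rewrite rPE //; case: ifP => Qb //.
  by rewrite (GP_fix gq) //= Pb Qb.
apply: eq_big.
  case=> p1 p2 /=; apply/idP/idP.
    case/andP => g /eqP E; have c := GP_col g.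
    move: g c E; set q := (p1 * p2)%g => g c [E1 E2].
    by rewrite -E1 -E2 !GP_rP.
  case/andP => g1 g2.
  have c1 := GP_col g1; have c2 := GP_col g2.
  have e1 : rP P (p1 * p2)%g = p1.
    apply/permP => b; rewrite rPE ?col_presM // permM.
    case: ifP => Pb.
      by rewrite (GP_fix g2) // (colP _ c1) dPQ.
    by rewrite (GP_fix g1) // Pb.
  have e2 : rP Q (p1 * p2)%g = p2.
    apply/permP => b; rewrite rPE ?col_presM // permM.
    case: ifP => Qb.
      by rewrite (GP_fix g1) //; apply/negP => Pb; move: (dPQ _ Pb); rewrite Qb.
    by rewrite (GP_fix g2) // Qb.
  rewrite e1 e2 eqxx andbT; apply/andP; split; first exact: col_presM.
  apply/forallP => b; apply/implyP; rewrite /= negb_or => /andP [nP nQ].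
  by rewrite permM (GP_fix g1) // (GP_fix g2).
case=> p1 p2 /= /andP [g /eqP E].
have [g1 g2] : GP P p1 /\ GP Q p2.
  have c := GP_col g.
  move: g c E; set q := (p1 * p2)%g => g c [E1 E2].
  by rewrite -E1 -E2 !GP_rP.
have c1 := GP_col g1; have c2 := GP_col g2.
rewrite odd_permM signr_addb.
rewrite (bigID (fun b : box L => P (ssval b).1)) /=.
have -> : \prod_(i | (P (ssval i).1 || Q (ssval i).1) && P (ssval i).1)
     v (ssval i).2 0 (Fb ((p1 * p2)%g i)) =
     \prod_(i | P (ssval i).1) v (ssval i).2 0 (Fb (p1 i)).
  apply: eq_big => [b|b Pb]; first by case: (P _); rewrite ?andbF.
  rewrite permM (GP_fix g2) // (colP _ c1); apply: dPQ; by case/andP: Pb.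
have -> : \prod_(i | (P (ssval i).1 || Q (ssval i).1) && ~~ P (ssval i).1)
     v (ssval i).2 0 (Fb ((p1 * p2)%g i)) =
     \prod_(i | Q (ssval i).1) v (ssval i).2 0 (Fb (p2 i)).
  apply: eq_big => [b|b Qb].
    case Pb: (P (ssval b).1) => /=; last by rewrite andbT.
    by rewrite (negbTE (dPQ _ Pb)).
  rewrite permM (GP_fix g1) //; by case/andP: Qb.
by rewrite -!mulrA; congr (_ * _); rewrite mulrCA.
Qed.


Lemma A_ext (P P' : pred nat) v Fb : P =1 P' -> A P v Fb = A P' v Fb.
Proof.
move=> e; apply: eq_big => [q|q _].
  rewrite /GP; congr (_ && _); apply: eq_forallb => b; by rewrite e.
congr (_ * _); apply: eq_bigl => b; by rewrite e.
Qed.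

End Work.

Lemma mem_shape (cols : seq nat) (j r : nat) :
  ((j, r) \in shape_boxes cols) = (j < size cols)%N && (r < nth 0%N cols j)%N.
Proof.
apply/allpairsPdep/andP.
  case=> x [y [hx hy [-> ->]]]; move: hx hy; rewrite !mem_iota /= !add0n.
  by move=> -> ->.
case=> hj hr; exists j, r; by rewrite !mem_iota /= !add0n hj hr.
Qed.

Lemma mem_shape' (cols : seq nat) (p : nat * nat) :
  (p \in shape_boxes cols) = (p.1 < size cols)%N && (p.2 < nth 0%N cols p.1)%N.
Proof. by case: p => j r; rewrite mem_shape. Qed.

Section Join.
Variables (F : fieldType) (n : nat) (z0 : 'I_n).

Definition liftF (lam : seq nat) (f : {ffun box lam -> 'I_n}) (p : nat * nat) : 'I_n :=
  if (insub p : option (box lam)) is Some b then f b else z0.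

Definition ext (L lam : seq nat) (o : nat) (f : {ffun box lam -> 'I_n}) : {ffun box L -> 'I_n} :=
  [ffun b => liftF f ((ssval b).1 - o, (ssval b).2)%N].

Definition join (lam mu : seq nat) (f : {ffun box mu -> 'I_n})
   (h : {ffun skewbox lam mu -> 'I_n}) : {ffun box lam -> 'I_n} :=
  [ffun b => if (insub (ssval b) : option (box mu)) is Some c then f c
     else if (insub (ssval b) : option (skewbox lam mu)) is Some c then h c else z0].

Lemma mem_skew (lam mu : seq nat) p :
  (p \in [seq p <- shape_boxes lam | p \notin shape_boxes mu]) =
  (p \in shape_boxes lam) && (p \notin shape_boxes mu).
Proof. by rewrite mem_filter andbC. Qed.

Lemma agree_join (lam mu : seq nat) (Fl : {ffun box lam -> 'I_n}) (f : {ffun box mu -> 'I_n}) (h : {ffun skewbox lam mu -> 'I_n}) :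
  agree Fl f h = (Fl == join f h).
Proof.
apply/idP/eqP.
  move=> /forallP H; apply/ffunP => b; rewrite ffunE.
  move: (H b); case: insubP => [c _ _|nmu] /andP [E1 E2]; first exact/eqP.
  move: E2; case: insubP => [c _ _|nsk]; first by move/eqP.
  by move: nsk; rewrite mem_skew (valP b) nmu.
move=> ->; apply/forallP => b; rewrite !ffunE.
case: insubP => [c Pmu _|nmu] /=.
  rewrite eqxx /=; case: insubP => [c' Psk _|] //.
  by move: Psk; rewrite mem_skew Pmu andbF.
by case: insubP => [c' Psk _|] //=.
Qed.

Lemma apolarE (lam mu : seq nat) (T : tensor F n (box lam)) (g : tensor F n (box mu)) (h : {ffun skewbox lam mu -> 'I_n}) :
  apolar T g h = \sum_(f : {ffun box mu -> 'I_n}) g f * T (join f h).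
Proof.
rewrite ffunE; apply: eq_bigr => f _; rewrite (big_pred1 (join f h)) //.
move=> Fl; exact: agree_join.
Qed.

End Join.


Section Key.
Variables (F : fieldType) (n : nat) (z0 : 'I_n) (L lam mu rest : seq nat) (d k e : nat).
Hypotheses (Hlam : lam = nseq d k ++ rest) (Hmu : mu = nseq e k) (Hed : (e <= d)%N).

Lemma F1 (p : nat * nat) : p \in shape_boxes lam -> (p.1 < e)%N -> p \in shape_boxes mu.
Proof.
rewrite !mem_shape' Hlam Hmu size_cat !size_nseq nth_cat size_nseq !nth_nseq => /andP [_ H] pe.
by move: H; rewrite pe (leq_trans pe Hed).
Qed.

Lemma F2 (p : nat * nat) : (e <= p.1)%N -> p \notin shape_boxes mu.
Proof. by rewrite mem_shape' Hmu size_nseq => H; rewrite ltnNge H. Qed.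

Lemma F3 (p : nat * nat) : (d <= p.1)%N ->
  (p \in shape_boxes lam) = ((p.1 - d, p.2)%N \in shape_boxes rest).
Proof.
case: p => j r /= H; rewrite !mem_shape' /= Hlam size_cat size_nseq nth_cat size_nseq.
have -> : (j < d)%N = false by rewrite ltnNge H.
by rewrite -{1}(subnKC H) ltn_add2l.
Qed.

Definition rep (T : tensor F n (box lam)) (o m : nat) (c : 'I_m -> F) (vs : 'I_m -> nat -> 'rV[F]_n) :=
  forall f', T f' = \sum_(i < m) c i * A (L:=L) (fun j => o <= j)%N (vs i) (ext z0 L o f').

Definition f0 : {ffun box mu -> 'I_n} := [ffun _ => z0].
Definition h0 : {ffun skewbox lam mu -> 'I_n} := [ffun _ => z0].

Definition gam o (w : nat -> 'rV[F]_n) (g : tensor F n (box mu)) : F :=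
  \sum_(f : {ffun box mu -> 'I_n}) g f * A (L:=L) (fun j => (o <= j) && (j < o + e))%N w (ext z0 L o (join z0 f h0)).
Definition bet o (w : nat -> 'rV[F]_n) (h : {ffun skewbox lam mu -> 'I_n}) : F :=
  A (L:=L) (fun j => o + e <= j)%N w (ext z0 L o (join z0 f0 h)).

Lemma ext_low o (f : {ffun box mu -> 'I_n}) (h h' : {ffun skewbox lam mu -> 'I_n}) (b : box L) :
  (o <= (ssval b).1)%N && ((ssval b).1 < o + e)%N ->
  ext z0 L o (join z0 f h) b = ext z0 L o (join z0 f h') b.
Proof.
move=> /andP [H1 H2]; rewrite !ffunE /liftF.
case: insubP => [c Pc Ec|] //; rewrite !ffunE.
case: insubP => [c' _ _|nmu] //; exfalso; move/negP: nmu; apply.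
apply: F1; first exact: (valP c).
by rewrite Ec /= ltn_subLR // addnC.
Qed.

Lemma ext_high o (f f' : {ffun box mu -> 'I_n}) (h : {ffun skewbox lam mu -> 'I_n}) (b : box L) :
  (o + e <= (ssval b).1)%N ->
  ext z0 L o (join z0 f h) b = ext z0 L o (join z0 f' h) b.
Proof.
move=> H; rewrite !ffunE /liftF.
case: insubP => [c Pc Ec|] //; rewrite !ffunE.
case: insubP => [c' Pm Ec'|_] //.
have HH : (e <= (ssval c).1)%N.
  rewrite Ec /= leq_subRL //.
  exact: leq_trans (leq_addr _ _) H.
by move/negP: (F2 HH).
Qed.

Lemma key (T : tensor F n (box lam)) o m c vs (R : rep T o c vs) (g : tensor F n (box mu)) (h : {ffun skewbox lam mu -> 'I_n}) :
  apolar T g h = \sum_(i < m) c i * gam o (vs i) g * bet o (vs i) h.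
Proof.
rewrite (apolarE z0).
under eq_bigr => f _ do rewrite R mulr_sumr.
rewrite exchange_big /=; apply: eq_bigr => i _.
rewrite /gam (mulr_sumr _ _ _ (c i)) [RHS]mulr_suml; apply: eq_bigr => f _.
rewrite (@A_ext F n L (fun j => o <= j)%N (predU (fun j => (o <= j) && (j < o + e)) (fun j => o + e <= j))%N); last first.
  move=> j /=; case: (leqP (o + e) j) => H; rewrite ?orbT ?orbF ?andbT //.
  by rewrite (leq_trans (leq_addr _ _) H).
rewrite A_split; last first.
  by move=> j /= /andP [_ H]; rewrite -ltnNge.
rewrite (@A_dep F n L _ _ _ (ext z0 L o (join z0 f h0))); last by move=> b H; apply: ext_low.
rewrite (@A_dep F n L (fun j => o + e <= j)%N _ _ (ext z0 L o (join z0 f0 h))); last by move=> b H; apply: ext_high.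
rewrite /bet !mulrA; congr (_ * _ * _); exact: mulrC.
Qed.

End Key.


Section Key2.
Variables (F : fieldType) (n : nat) (z0 : 'I_n) (L lam mu rest : seq nat) (d k e : nat).
Hypotheses (Hlam : lam = nseq d k ++ rest) (Hmu : mu = nseq e k) (Hed : (e <= d)%N).

Definition hf (f'' : {ffun box rest -> 'I_n}) : {ffun skewbox lam mu -> 'I_n} :=
  [ffun b => liftF z0 f'' ((ssval b).1 - d, (ssval b).2)%N].

Lemma skew_ge (Hde : e = d) (b : skewbox lam mu) : (d <= (ssval b).1)%N.
Proof.
have := valP b; rewrite mem_skew => /andP [Pl Pnm].
rewrite leqNgt; apply/negP => Hlt; move/negP: Pnm; apply.
apply: (F1 Hlam Hmu Hed) => //; by rewrite Hde.
Qed.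

Lemma reindexE (Hde : e = d) (s : tensor F n (skewbox lam mu)) (f'' : {ffun box rest -> 'I_n}) :
  Defs.reindex rest d s f'' = s (hf f'').
Proof.
rewrite ffunE (big_pred1 (hf f'')) // => h.
apply/idP/eqP.
  move=> /forallP H; apply/ffunP => b; rewrite ffunE /liftF.
  have Hb := skew_ge Hde b.
  have := valP b; rewrite mem_skew => /andP [Pl _].
  case: (@insubP _ _ (box rest) ((ssval b).1 - d, (ssval b).2)%N) => [b' Pr Eb'|nr].
    move: (H b) => /forallP /(_ b') /implyP; rewrite Eb' /= subnK // !eqxx => /(_ isT) /eqP.
    by [].
  by exfalso; move: nr; rewrite -(F3 Hlam) // Pl.
move=> ->; apply/forallP => b; apply/forallP => b'; apply/implyP => /andP [/eqP E1 /eqP E2].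
rewrite ffunE /liftF E1 E2 addnK.
case: (@insubP _ _ (box rest) ((ssval b').1, (ssval b').2)%N) => [b'' _ E|nr].
  have -> : b'' = b' by apply: val_inj; rewrite E -surjective_pairing.
  exact: eqxx.
by exfalso; move: nr; rewrite -surjective_pairing (valP b').
Qed.


Lemma ext_step (Hde : e = d) o (f : {ffun box mu -> 'I_n}) (f'' : {ffun box rest -> 'I_n}) (b : box L) :
  (o + d <= (ssval b).1)%N ->
  ext z0 L o (join z0 f (hf f'')) b = ext z0 L (o + d) f'' b.
Proof.
move=> H; rewrite !ffunE /liftF.
have Hb : (d <= (ssval b).1 - o)%N.
  rewrite leq_subRL //.
  exact: leq_trans (leq_addr _ _) H.
case: (@insubP _ _ (box lam) ((ssval b).1 - o, (ssval b).2)%N) => [c Pc Ec|nl].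
  rewrite ffunE.
  have Hc : (e <= (ssval c).1)%N by rewrite Ec Hde.
  case: (@insubP _ _ (box mu) (ssval c)) => [c' Pm _|_].
    by exfalso; move/negP: (F2 Hmu Hc).
  case: (@insubP _ _ (skewbox lam mu) (ssval c)) => [c'' Psk Ec''|nsk].
    rewrite ffunE /liftF Ec'' Ec /= subnDA; reflexivity.
  by exfalso; move: nsk; rewrite mem_skew (valP c) (F2 Hmu Hc).
case: (@insubP _ _ (box rest) ((ssval b).1 - (o + d), (ssval b).2)%N) => [c Pr _|]; last reflexivity.
exfalso; move: nl; rewrite (F3 Hlam) //= -subnDA Pr.
by [].
Qed.

Lemma step (Hde : e = d) (T : tensor F n (box lam)) o m (c : 'I_m -> F) vs
  (R : rep z0 L T o c vs) (g : tensor F n (box mu)) :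
  rep z0 L (Defs.reindex rest d (apolar T g)) (o + d) (fun i => c i * gam z0 L lam e o (vs i) g) vs.
Proof.
move=> f''; rewrite reindexE // (key Hlam Hmu Hed R); apply: eq_bigr => i _.
congr (_ * _); rewrite /bet Hde.
apply: A_dep => b Hb; exact: ext_step.
Qed.

Lemma catrank_le (T : tensor F n (box lam)) o m (c : 'I_m -> F) vs
  (R : rep z0 L T o c vs) : (cat_rank mu T <= m)%N.
Proof.
rewrite /cat_rank.
set M := \matrix_(i, j) _.
pose U : 'M[F^o]_(#|{ffun box mu -> 'I_n}|, m) :=
  \matrix_(i, kk) (c kk * gam z0 L lam e o (vs kk) (young (delta F (enum_val i)))).
pose W : 'M[F^o]_(m, #|{ffun skewbox lam mu -> 'I_n}|) :=
  \matrix_(kk, j) bet z0 L e o (vs kk) (enum_val j).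
have -> : M = U *m W.
  apply/matrixP => i j; rewrite !mxE (key Hlam Hmu Hed R); apply: eq_bigr => kk _.
  by rewrite !mxE.
exact: leq_trans (mxrankM_maxl _ _) (rank_leq_col _).
Qed.

End Key2.


Lemma uphalf_le d : (uphalf d <= d)%N.
Proof. by rewrite leq_uphalf_double -addnn leq_addr. Qed.

Lemma main (F : fieldType) n (z0 : 'I_n) (L : seq nat) (bl : seq (nat * nat)) :
  forall (T : tensor F n (box (cols_of bl))) r, CatProc T r -> T != 0 ->
  forall o m (c : 'I_m -> F) vs, rep z0 L T o c vs -> (r <= m)%N.
Proof.
elim: bl => [|[k d] rest IH] T r /=.
  move=> -> T0 o m c vs R; case: m c vs R => [|m] c vs R //.
  exfalso; move/negP: T0; apply; apply/eqP/ffunP => f'.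
  by rewrite R big_ord0 ffunE.
case=> [[Hlt ->]|[_ [t' [[nz [g [_ Eg]] _] Hc]]]] T0 o m c vs R.
  exact: (@catrank_le F n z0 L _ _ (cols_of rest) d k (uphalf d) erefl erefl (uphalf_le d) T o m c vs R).
apply: (IH t' r Hc nz (o + d) m _ vs).
rewrite Eg.
exact: (@step F n z0 L _ _ (cols_of rest) d k d erefl erefl (leqnn d) erefl T o m c vs R g).
Qed.

Lemma rank_one_A (F : fieldType) n (z0 : 'I_n) (L : seq nat) (w : nat -> 'rV[F]_n) (f' : {ffun box L -> 'I_n}) :
  rank_one_elt L w f' = A (fun j => 0 <= j)%N w (ext z0 L 0 f').
Proof.
rewrite /rank_one_elt /col_antisym sum_ffunE /A.
apply: eq_big => [q|q cq].
  rewrite /GP; apply/idP/andP => [cq|[] //]; split=> //.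
  by apply/forallP => b; rewrite leq0n.
rewrite !ffunE; congr (_ * _).
apply: eq_big => [b|b _]; first by rewrite leq0n.
rewrite !ffunE /liftF subn0 -surjective_pairing.
case: insubP => [b' _ E|nb].
  by congr (w _ 0 (f' _)); apply: val_inj; rewrite E.
by exfalso; move: nb; rewrite (valP (q b)).
Qed.

Theorem corollary5p5 (F : closedFieldType) (HF : [pchar F] =i pred0) (n : nat)
    (bl : seq (nat * nat))
    (Hdec : sorted (fun p q : nat * nat => (q.1 < p.1)%N) bl)
    (Hpos : all (fun p : nat * nat => (0 < p.1)%N && (0 < p.2)%N) bl)
    (Hlen : (head 0%N (cols_of bl) < n)%N)
    (t : tensor F n (box (cols_of bl))) (Ht : inSchur t) (Ht0 : t != 0)
    (r : nat) (Hr : CatProc t r) :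
  forall (m : nat) (v : 'I_m -> nat -> 'rV[F]_n),
    (forall i, lin_indep_data (cols_of bl) (v i)) ->
    t = \sum_(i < m) rank_one_elt (cols_of bl) (v i) ->
    (r <= m)%N.
Proof.
move=> m v _ Et.
have n0 : (0 < n)%N by apply: leq_ltn_trans Hlen.
pose z0 : 'I_n := Ordinal n0.
apply: (@main F n z0 (cols_of bl) bl t r Hr Ht0 0 m (fun _ => 1) v).
move=> f'; rewrite Et sum_ffunE; apply: eq_bigr => i _.
by rewrite mul1r (rank_one_A z0).
Qed.
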